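(* In the setting of the context, let $\hat V\in C^{0,\alpha}(\Sigma,\mathbb{R})$ be strictly positive, let $c\neq0$ be the unique real with $P(-c\hat V)=0$, set $V=|c|\hat V$, and for $y\ge1$ let $$\pi(y)=\sum_{\tau:\ e^{V(\tau)}\le y}\mathrm{tr}({}^t\Psi_\tau),$$ the sum over periodic orbits $\tau$ of $\sigma$. Then for every $\gamma'>1$, $\limsup_{y\to+\infty}\frac{\pi(y)}{y^{\gamma'}}<+\infty$.
   Context: $\Sigma=\{1,\dots,t\}^{\mathbb{N}}$ with the metric $d_\gamma$ (fixed $\gamma\in(0,1)$, $d_\gamma(x,y)=\inf\{\gamma^{k+1}:x_j=y_j,\ j\le k\}$), $\sigma$ the shift, $ix=(i,x_0,x_1,\dots)$. $\psi_1,\dots,\psi_t$ are affine bijections of $\mathbb{R}^d$ with $\max\mathrm{Lip}(\psi_i)<1$; $q\in\{1,\dots,d\}$; $(D\psi_i)_*$ the pull-back on $\Lambda^q(\mathbb{R}^d)$; $M^q$ the self-adjoint operators on $\Lambda^q$; $\Psi_i(A)={}^t(D\psi_i)_*A(D\psi_i)_*$, ${}^t\Psi_i(A)=(D\psi_i)_*A\,{}^t(D\psi_i)_*$. Assume $(ND_q)$: there is $\gamma'' >0$ with, for all $c,e\in\Lambda^q$, some $i$ satisfying $|((D\psi_i)_*c,e)|\ge\gamma''\|c\|\|e\|$. For $W\in C^{0,\alpha}(\Sigma,\mathbb{R})$, $\beta_W>0$ is the unique eigenvalue of $(\mathcal{L}_WA)(x)=\sum_ie^{W(ix)}\Psi_i(A(ix))$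 admitting an eigenfunction in $C(\Sigma,M^q)$ positive definite at every point, and $P(W)=\log\beta_W$. A periodic orbit $\tau$ is $\{x,\sigma(x),\dots,\sigma^{n-1}(x)\}$ with $n$ the minimal period of $x$; $V(\tau)=\sum_{j=0}^{n-1}V(\sigma^j(x))$ and $\mathrm{tr}({}^t\Psi_\tau)=\mathrm{tr}({}^t\Psi_{x_0}\circ\dots\circ{}^t\Psi_{x_{n-1}})$, both independent of the choice of $x\in\tau$. *)

(* Defs.v *)
From HB Require Import structures.
From mathcomp Require Import all_boot all_order all_algebra.
From mathcomp Require Import all_classical all_reals all_analysis.
Set Implicit Arguments. Unset Strict Implicit. Unset Printing Implicit Defensive.
Import Order.TTheory GRing.Theory Num.Theory.
Local Open Scope ring_scope.
Local Open Scope classical_set_scope.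

Section Defs.
Variable R : realType.

Definition Sig (t : nat) := nat -> 'I_t.
Definition shift t (x : Sig t) : Sig t := fun n => x n.+1.
Definition scons t (i : 'I_t) (x : Sig t) : Sig t :=
  fun n => match n with 0%N => i | m.+1 => x m end.

(* x and y agree on the first n coordinates, i.e. d_gamma(x,y) <= gamma^n *)
Definition agree t (n : nat) (x y : Sig t) := forall j, (j < n)%N -> x j = y j.

(* W in C^{0,alpha}(Sigma, R) for the metric d_gamma
   (d_gamma(x,y) = gamma^n where n is the first index with x_n <> y_n). *)
Definition holder t (gam alpha : R) (W : Sig t -> R) :=
  exists K : R, forall (n : nat) (x y : Sig t), agree n x y ->
    `|W x - W y| <= K * (gam ^+ n) `^ alpha.

Definition enorm d (v : 'cV[R]_d) : R := Num.sqrt (\sum_(j < d) v j 0 ^+ 2).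
Definition dotv n (u v : 'cV[R]_n) : R := (u^T *m v) 0 0.

Definition affine_bij d (f : 'cV[R]_d -> 'cV[R]_d) :=
  exists (L : 'M[R]_d) (b : 'cV[R]_d), L \in unitmx /\ forall v, f v = L *m v + b.

(* matrix of the linear part D f of an affine map f *)
Definition Dmat d (f : 'cV[R]_d -> 'cV[R]_d) : 'M[R]_d :=
  \matrix_(j, k) (f (delta_mx k 0) - f 0) j 0.

(* Basis dx_I of Lambda^q(R^d), I = (I_0 < ... < I_{q-1}) strictly increasing;
   this basis is orthonormal for the inner product induced by R^d. *)
Definition incr d q (f : {ffun 'I_q -> 'I_d}) : bool :=
  [forall a : 'I_q, forall b : 'I_q, (a < b)%N ==> (f a < f b)%N].
Definition Kq d q := {f : {ffun 'I_q -> 'I_d} | incr f}.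
Definition dimL d q := #|{: Kq d q}|.
Definition kb d q (i : 'I_(dimL d q)) : Kq d q := enum_val i.

(* Matrix (in the basis dx_I) of the pull-back L_* on Lambda^q of a linear
   map L of R^d:  L_* dx_I = \sum_J det(L[I,J]) dx_J. *)
Definition pullmx d q (L : 'M[R]_d) : 'M[R]_(dimL d q) :=
  \matrix_(J, I) \det (\matrix_(a < q, b < q) L (val (kb I) a) (val (kb J) b)).

Definition symmx n (A : 'M[R]_n) := A^T = A.
Definition posdef n (A : 'M[R]_n) :=
  symmx A /\ forall v : 'cV[R]_n, v != 0 -> 0 < dotv v (A *m v).

(* continuity of A : Sigma -> M^q (product topology) *)
Definition contS t n (A : Sig t -> 'M[R]_n) :=
  forall (x : Sig t) (eps : R), 0 < eps -> exists m : nat, forall y, agree m x y ->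
    forall a b, `|A y a b - A x a b| < eps.

(* The transfer operator L_W (A)(x) = sum_i e^{W(ix)} Psi_i(A(ix)),
   Psi_i(A) = ^t P_i A P_i with P_i the matrix of (D psi_i)_* . *)
Definition transfer t d q (psi : 'I_t -> 'cV[R]_d -> 'cV[R]_d) (W : Sig t -> R)
    (A : Sig t -> 'M[R]_(dimL d q)) : Sig t -> 'M[R]_(dimL d q) :=
  fun x => \sum_(i < t) expR (W (scons i x)) *:
      ((@pullmx d q (Dmat (psi i)))^T *m A (scons i x) *m @pullmx d q (Dmat (psi i))).

Definition pos_eigen t d q psi (W : Sig t -> R) (beta : R) :=
  exists A : Sig t -> 'M[R]_(dimL d q), contS A /\ (forall x, posdef (A x)) /\
    forall x, @transfer t d q psi W A x = beta *: A x.

(* P(W) = p, i.e. beta_W = e^p (beta_W being the unique such eigenvalue). *)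
Definition pressure_is t d q psi (W : Sig t -> R) (p : R) :=
  @pos_eigen t d q psi W (expR p).

Definition perpt t n (w : {ffun 'I_n.+1 -> 'I_t}) : Sig t :=
  fun k => w (inord (k %% n.+1)).
Definition minper t (n : nat) (x : Sig t) : Prop :=
  (0 < n)%N /\ iter n (@shift t) x = x /\
  forall m, (0 < m < n)%N -> iter m (@shift t) x <> x.
Definition birk t (V : Sig t -> R) n (x : Sig t) : R :=
  \sum_(j < n) V (iter j (@shift t) x).

Definition tPsi t d q (psi : 'I_t -> 'cV[R]_d -> 'cV[R]_d) (i : 'I_t)
    (A : 'M[R]_(dimL d q)) : 'M[R]_(dimL d q) :=
  @pullmx d q (Dmat (psi i)) *m A *m (@pullmx d q (Dmat (psi i)))^T.
Definition tPsi_word t d q psi (s : seq 'I_t) :=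
  foldr (fun i f => @tPsi t d q psi i \o f) id s.

(* trace of a linear operator T on the space M^q of self-adjoint operators,
   computed in the basis S_ab (a <= b): S_aa = E_aa, S_ab = E_ab + E_ba;
   the coordinate of a symmetric M on S_ab is M a b. *)
Definition Sbasis n (a b : 'I_n) : 'M[R]_n :=
  if a == b then delta_mx a a else delta_mx a b + delta_mx b a.
Definition trM n (T : 'M[R]_n -> 'M[R]_n) : R :=
  \sum_(a < n) \sum_(b < n | (a <= b)%N) T (Sbasis a b) a b.

(* contribution of the periodic orbits of minimal period n.+1: each such orbit
   has exactly n.+1 points, each of the form w^infinity for a word w. *)
Definition orbit_term t d q psi (V : Sig t -> R) (y : R) (n : nat) : R :=
  n.+1%:R^-1 * \sum_(w : {ffun 'I_n.+1 -> 'I_t} |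
      `[< minper n.+1 (perpt w) >] && (expR (birk V n.+1 (perpt w)) <= y))
    trM (@tPsi_word t d q psi [seq w k | k <- enum 'I_n.+1]).

Definition piV t d q psi (V : Sig t -> R) (y : R) : R :=
  \sum_(n \in [set: nat]) @orbit_term t d q psi V y n.

End Defs.

(* Main.v *)
Require Import Defs.
From HB Require Import structures.
From mathcomp Require Import all_boot all_order all_algebra.
From mathcomp Require Import all_classical all_reals all_analysis.
From mathcomp Require Import ring lra.
Import Order.TTheory GRing.Theory Num.Theory.
Local Open Scope ring_scope.
Local Open Scope classical_set_scope.

Set Implicit Arguments. Unset Strict Implicit. Unset Printing Implicit Defensive.

Lemma agree_trans t n (x y z : Sig t) : agree n x y -> agree n y z -> agree n x z.
Proof. by move=> h1 h2 j hj; rewrite h1 // h2. Qed.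
Lemma agree_sym t n (x y : Sig t) : agree n x y -> agree n y x.
Proof. by move=> h j hj; rewrite h. Qed.
Lemma agree_le t m n (x y : Sig t) : (m <= n)%N -> agree n x y -> agree m x y.
Proof. by move=> hmn h j hj; apply: h; apply: leq_trans hmn. Qed.

Lemma konig (R : realType) t (Q : Sig t -> R -> Prop) :
  (forall y r r', Q y r -> r <= r' -> Q y r') ->
  (forall x, exists m r, forall y, agree m x y -> Q y r) ->
  exists r, forall y, Q y r.
Proof.
move=> Qmon loc.
apply: contrapT => H0.
have [[y0 _]|nY] := pselect (exists y0 : Sig t, True); last first.
  by apply: H0; exists 0 => y; exfalso; apply: nY; exists y.
pose bad k z := ~ exists r, forall y, agree k z y -> Q y r.
have step : forall kz : nat * Sig t, exists z',
    bad kz.1 kz.2 -> agree kz.1 kz.2 z' /\ bad kz.1.+1 z'.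
  move=> [k z] /=.
  have [[z' [h1 h2]]|nex] := pselect (exists z', agree k z z' /\ bad k.+1 z').
    by exists z'.
  exists z => hb; exfalso; apply: hb.
  pose zi (i : 'I_t) : Sig t := fun j => if (j < k)%N then z j else i.
  have gi : forall i, exists r, forall y, agree k.+1 (zi i) y -> Q y r.
    move=> i; apply: contrapT => nb; apply: nex; exists (zi i); split => //.
    by move=> j hj; rewrite /zi hj.
  have [rf hrf] := choice gi.
  exists (\sum_i `|rf i|) => y hy.
  apply: (Qmon _ (rf (y k))).
    apply: hrf => j; rewrite ltnS leq_eqVlt => /orP[/eqP ->|hj].
      by rewrite /zi ltnn.
    by rewrite /zi hj hy.
  rewrite (bigD1 (y k)) //= ler_wpDr ?sumr_ge0 // ?real_ler_norm ?num_real //.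
have [f hf] := choice step.
pose zs := fix zs k := if k is k'.+1 then f (k', zs k') else y0.
have hbad : forall k, bad k (zs k) /\ agree k (zs k) (zs k.+1).
  elim=> [|k [IH _]].
    have b0 : bad 0 y0.
      by move=> [r hr]; apply: H0; exists r => y; apply: hr.
    by have := hf (0%N, y0) b0.
  have [a1 a2] := hf (k, zs k) IH.
  split => //.
  exact: (proj1 (hf (k.+1, zs k.+1) a2)).
have hch : forall j k, (j < k)%N -> agree j.+1 (zs j.+1) (zs k).
  move=> j; elim=> // k IH; rewrite ltnS leq_eqVlt => /orP[/eqP <-|hjk].
    by move=> i _.
  apply: agree_trans (IH hjk) _.
  apply: (agree_le hjk); exact: (proj2 (hbad k)).
pose x j := zs j.+1 j.
have hx : forall k, agree k x (zs k).
  move=> k j hj; rewrite /x; apply: (hch j k hj); by [].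
have [m [r hr]] := loc x.
apply: (proj1 (hbad m)); exists r => y hy; apply: hr.
exact: agree_trans (hx m) hy.
Qed.

Definition qf (R : realType) n (B : 'M[R]_n) (u : 'rV[R]_n) : R :=
  \sum_j u 0 j * \sum_l B j l * u 0 l.

Lemma dotvE (R : realType) n (u w : 'cV[R]_n) : dotv u w = \sum_j u j 0 * w j 0.
Proof. by rewrite /dotv mxE; apply: eq_bigr => j _; rewrite mxE. Qed.

Lemma dotv_qf (R : realType) n (B : 'M[R]_n) (v : 'cV[R]_n) :
  dotv v (B *m v) = qf B v^T.
Proof.
rewrite dotvE /qf; apply: eq_bigr => j _; rewrite !mxE; congr (_ * _).
by apply: eq_bigr => l _; rewrite mxE.
Qed.

Module QF.
Import numFieldNormedType.Exports.
Lemma qf_cont (R : realType) n (B : 'M[R]_n) : continuous (qf B : 'rV[R]_n -> R).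
Proof.
rewrite /qf.
apply: (@continuous_big _ _ +%R 0 xpredT _ _ (index_enum _)).
  exact: add_continuous.
move=> j _ x; apply: continuousM; first exact: coord_continuous.
apply: (@continuous_big _ _ +%R 0 xpredT _ _ (index_enum _)).
  exact: add_continuous.
move=> l _ y; apply: continuousM; first exact: cst_continuous.
exact: coord_continuous.
Qed.

End QF.
Lemma qfZ (R : realType) n (B : 'M[R]_n) k u : qf B (k *: u) = k ^+ 2 * qf B u.
Proof.
rewrite /qf mulr_sumr; apply: eq_bigr => j _; rewrite mulr_sumr mulr_sumr mulr_sumr.
apply: eq_bigr => l _; rewrite !mxE; ring.
Qed.
Module EL.
Import numFieldNormedType.Exports.
Lemma ellip1 (R : realType) n (B : 'M[R]_n) :
  (forall v : 'cV_n, v != 0 -> 0 < dotv v (B *m v)) ->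
  exists a, 0 < a /\ forall v : 'cV_n, a * \sum_j v j 0 ^+ 2 <= dotv v (B *m v).
Proof.
case: n B => [|n] B hpos.
  by exists 1; split => // v; rewrite big_ord0 mulr0 dotvE big_ord0.
pose S := ((@Num.norm _ _) : 'rV[R]_n.+1 -> R) @^-1` [set 1].
have hS0 : S !=set0.
  have u0n : (const_mx 1 : 'rV[R]_n.+1) != 0.
    by apply/eqP => /matrixP /(_ 0 0); rewrite !mxE => /eqP; rewrite oner_eq0.
  by exists (`|const_mx 1 : 'rV[R]_n.+1|^-1 *: const_mx 1); rewrite /S /= normfZV.
have cS : compact S.
  apply: bounded_closed_compact.
    exists 1; split => // M hM u; rewrite /S /= => ->.
    exact: ltW.
  apply: preimage_closed; last exact: closed_eq.
  by move=> x _; apply: norm_continuous.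
have [c Sc hmin] := EVT_min_rV hS0 cS (continuous_subspaceT (@QF.qf_cont R n.+1 B)).
move: Sc; rewrite inE /S /= => nc.
have c0 : c != 0 by apply/eqP => c0; move: nc; rewrite c0 normr0 => /eqP; rewrite eq_sym oner_eq0.
have a0 : 0 < qf B c.
  have := hpos c^T; rewrite dotv_qf trmxK; apply; by rewrite trmx_eq0.
have hq : forall u, qf B c * `|u| ^+ 2 <= qf B u.
  move=> u; have [->|u0] := eqVneq u 0.
    by rewrite normr0 expr0n /= mulr0 /qf big1 // => j _; rewrite mxE mul0r.
  have hw : qf B u = `|u| ^+ 2 * qf B (`|u|^-1 *: u).
    by rewrite qfZ exprVn mulrA divff ?mul1r // expf_neq0 // normr_eq0.
  rewrite hw mulrC; apply: ler_wpM2l; first exact: sqr_ge0.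
  by apply: hmin; rewrite inE /S /= normfZV.
exists (qf B c / n.+1%:R); split; first by rewrite divr_gt0.
move=> v; rewrite dotv_qf; apply: le_trans (hq v^T).
rewrite mulrAC ler_pdivrMr // -mulrA; apply: ler_wpM2l; first exact: ltW.
have hj : forall j, v j 0 ^+ 2 <= `|v^T| ^+ 2.
  move=> j; rewrite -real_normK ?num_real // lerXn2r ?nnegrE //.
  match goal with |- ?G => idtac G end.
  rewrite [leRHS]/Num.norm /= mx_normrE; apply/bigmax_geP; right => /=.
  by exists (0, j) => //=; rewrite mxE.
apply: le_trans (ler_sum _ (fun j _ => hj j)) _.
by rewrite sumr_const card_ord mulr_natr.
Qed.
End EL.

Lemma two_ab (R : realType) (a b : R) : 2 * (`|a| * `|b|) <= a ^+ 2 + b ^+ 2.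
Proof.
rewrite -(real_normK (num_real a)) -(real_normK (num_real b)).
have := sqr_ge0 (`|a| - `|b|); nra.
Qed.

Lemma quad_bound (R : realType) N (E : 'M[R]_N) (v : 'cV[R]_N) e :
  0 <= e -> (forall j l, `|E j l| <= e) ->
  `|dotv v (E *m v)| <= e * N%:R * \sum_j v j 0 ^+ 2.
Proof.
move=> e0 hE.
rewrite dotvE; apply: le_trans (ler_norm_sum _ _ _) _.
apply: (@le_trans _ _ (\sum_j \sum_l e / 2 * (v j 0 ^+ 2 + v l 0 ^+ 2))).
  apply: ler_sum => j _; rewrite mxE normrM.
  apply: le_trans (ler_wpM2l (normr_ge0 _) (ler_norm_sum _ _ _)) _.
  rewrite mulr_sumr; apply: ler_sum => l _.
  rewrite normrM.
  have h2 := two_ab (v j 0) (v l 0).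
  have h3 : `|E j l| * `|v l 0| <= e * `|v l 0| by apply: ler_wpM2r.
  have h4 : 0 <= `|v j 0| by [].
  have h5 : 0 <= `|v l 0| by [].
  nra.
rewrite (eq_bigr (fun j => e / 2 * (N%:R * v j 0 ^+ 2) + e / 2 * \sum_l v l 0 ^+ 2)).
  rewrite big_split /= sumr_const card_ord -!mulr_sumr.
  set S := \sum_(i < N) _.
  rewrite -(mulr_natr (e / 2 * S)) [X in X <= _](_ : _ = e * N%:R * S) //.
  by field.
move=> j _; rewrite -mulr_sumr big_split /= sumr_const card_ord mulrDr.
by rewrite mulr_natl.
Qed.

Lemma term_le_sum (R : realType) (I : finType) (F : I -> R) i :
  (forall j, 0 <= F j) -> F i <= \sum_j F j.
Proof.
by move=> h; rewrite (bigD1 i) //= ler_wpDr // sumr_ge0.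
Qed.

Lemma dotvB (R : realType) N (v : 'cV[R]_N) (B C : 'M[R]_N) :
  dotv v (B *m v) = dotv v (C *m v) + dotv v ((B - C) *m v).
Proof.
rewrite !dotvE -big_split /=; apply: eq_bigr => j _.
rewrite mulmxBl !mxE; ring.
Qed.

Lemma unif_ellip (R : realType) t N (A : Sig t -> 'M[R]_N) :
  contS A -> (forall x, posdef (A x)) ->
  exists a : R, 0 < a /\ forall x (v : 'cV[R]_N), a * \sum_j v j 0 ^+ 2 <= dotv v (A x *m v).
Proof.
move=> hc hpd.
pose Q y r := 0 < r /\ forall v : 'cV[R]_N, r^-1 * \sum_j v j 0 ^+ 2 <= dotv v (A y *m v).
have hS : forall v : 'cV[R]_N, 0 <= \sum_j v j 0 ^+ 2.
  by move=> v; apply: sumr_ge0 => j _; exact: sqr_ge0.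
have K1 : forall y r r', Q y r -> r <= r' -> Q y r'.
  move=> y r r' [r0 h] hrr'; split; first by apply: lt_le_trans hrr'.
  move=> v; apply: le_trans (h v); apply: ler_wpM2r => //.
  by rewrite lef_pV2 // ?posrE //; apply: lt_le_trans hrr'.
have K2 : forall x, exists m r, forall y, agree m x y -> Q y r.
  move=> x; have [a [a0 ha]] := EL.ellip1 (proj2 (hpd x)).
  have e0 : 0 < a / (2 * (N%:R + 1)) by rewrite divr_gt0 // mulr_gt0 // ltr_wpDl.
  have [m hm] := hc x _ e0.
  exists m, (2 / a) => y hy; split; first by rewrite divr_gt0.
  move=> v; rewrite (dotvB v (A y) (A x)).
  have hq' : `|dotv v ((A y - A x) *m v)| <= a / 2 * \sum_j v j 0 ^+ 2.
    apply: le_trans (quad_bound v (ltW e0) _) _.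
      by move=> j l; rewrite !mxE; apply: ltW; apply: hm.
    apply: ler_wpM2r => //.
    have hN : N%:R <= N%:R + 1 :> R by rewrite lerDl.
    have hN0 : 0 <= N%:R :> R by [].
    have hN1 : N%:R + 1 != 0 :> R by rewrite gt_eqF // ltr_wpDl.
    have -> : a / (2 * (N%:R + 1)) * N%:R = a / 2 * (N%:R / (N%:R + 1)) by field.
    apply: ler_piMr; first by rewrite divr_ge0 // ltW.
    by rewrite ler_pdivrMr ?mul1r // ltr_wpDl.
  have := ha v; rewrite invf_div.
  have := ler_norm (dotv v ((A y - A x) *m v)).
  have := hS v.
  rewrite ler_norml in hq'; case/andP: hq' => hq1 _.
  set S := \sum_j _ in hq1 *.
  move=> _ _ h2.
  have -> : a / 2 * S = a * S - a / 2 * S by field.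
  by rewrite lerD.
have [r hr] := konig K1 K2.
have [[y0 _]|ny] := pselect (exists y : Sig t, True); last first.
  by exists 1; split => // x; exfalso; apply: ny; exists x.
exists r^-1; split; first by rewrite invr_gt0; exact: (proj1 (hr y0)).
by move=> x v; exact: (proj2 (hr x)).
Qed.

Lemma unif_bound (R : realType) t N (A : Sig t -> 'M[R]_N) :
  contS A -> exists b : R, forall x j l, `|A x j l| <= b.
Proof.
move=> hc.
pose Q y (r : R) := forall j l, `|A y j l| <= r.
have K1 : forall y r r', Q y r -> r <= r' -> Q y r'.
  by move=> y r r' h hr j l; apply: le_trans (h j l) hr.
have K2 : forall x, exists m r, forall y, agree m x y -> Q y r.
  move=> x; have [m hm] := hc x 1 ltr01.
  exists m, (\sum_j \sum_l `|A x j l| + 1) => y hy j l.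
  have h1 : `|A y j l| <= `|A x j l| + 1.
    have := ltW (hm y hy j l).
    have := ler_normD (A y j l - A x j l) (A x j l); rewrite subrK.
    lra.
  apply: le_trans h1 _; rewrite lerD2r.
  apply: le_trans (@term_le_sum R _ (fun j => \sum_l `|A x j l|) j _) => /=.
    by apply: (@term_le_sum R _ (fun l => `|A x j l|) l).
  by move=> j'; apply: sumr_ge0.
exact: konig K1 K2.
Qed.

Lemma powR_n (R : realType) (gam alpha : R) n : 0 <= gam ->
  (gam ^+ n) `^ alpha = (gam `^ alpha) ^+ n.
Proof.
move=> g0; rewrite -powR_mulrn // -powRrM mulrC powRrM powR_mulrn //.
exact: powR_ge0.
Qed.

Lemma r_lt1 (R : realType) (gam alpha : R) : 0 < gam < 1 -> 0 < alpha ->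
  0 < gam `^ alpha < 1.
Proof.
case/andP=> g0 g1 a0; rewrite powR_gt0 //= /powR gt_eqF // expR_lt1.
by rewrite pmulr_rlt0 // ln_lt0 // g0.
Qed.

Module SP.
Import numFieldNormedType.Exports.
Lemma small_pow (R : realType) (r eps : R) : 0 <= r < 1 -> 0 < eps ->
  exists m, r ^+ m < eps.
Proof.
case/andP=> r0 r1 e0.
have hr : `|r| < 1 by rewrite ger0_norm.
move: (cvg_expr hr) => /cvgr0_norm_lt /(_ _ e0).
case=> m _ hm; exists m; have := hm m (leqnn m) => /=.
by rewrite ger0_norm // exprn_ge0.
Qed.
End SP.

Lemma holder_cont (R : realType) t (gam alpha : R) (V : Sig t -> R) :
  0 < gam < 1 -> 0 < alpha -> holder gam alpha V ->
  forall x eps, 0 < eps -> exists m, forall y, agree m x y -> `|V y - V x| < eps.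
Proof.
move=> hg ha [K hK] x eps e0.
have /andP[r0 r1] := r_lt1 hg ha.
have K1 : 0 < `|K| + 1 by rewrite ltr_wpDl.
have hr : 0 <= gam `^ alpha < 1 by rewrite ltW.
have [m hm] := SP.small_pow hr (divr_gt0 e0 K1).
exists m => y hy.
apply: le_lt_trans (hK m y x (agree_sym hy)) _.
rewrite powR_n; last by case/andP: hg => /ltW.
have hp : 0 <= (gam `^ alpha) ^+ m by rewrite exprn_ge0 // ltW.
apply: le_lt_trans (_ : _ <= (`|K| + 1) * (gam `^ alpha) ^+ m) _.
  apply: ler_wpM2r => //; apply: le_trans (ler_norm K) _; by rewrite lerDl.
by rewrite mulrC -ltr_pdivlMr.
Qed.

Lemma pos_lb (R : realType) t (gam alpha : R) (V : Sig t -> R) :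
  0 < gam < 1 -> 0 < alpha -> holder gam alpha V -> (forall x, 0 < V x) ->
  exists m0, 0 < m0 /\ forall x, m0 <= V x.
Proof.
move=> hg ha hh hp.
pose Q y (r : R) := 0 < r /\ r^-1 <= V y.
have K1 : forall y r r', Q y r -> r <= r' -> Q y r'.
  move=> y r r' [r0 h] hr; split; first by apply: lt_le_trans hr.
  by apply: le_trans h; rewrite lef_pV2 // ?posrE //; apply: lt_le_trans hr.
have K2 : forall x, exists m r, forall y, agree m x y -> Q y r.
  move=> x; have h2 : 0 < V x / 2 by rewrite divr_gt0.
  have [m hm] := holder_cont hg ha hh x h2.
  exists m, (2 / V x) => y hy; split; first by rewrite divr_gt0.
  rewrite invf_div; have := hm y hy; rewrite ltr_norml => /andP[h _].
  lra.
have [r hr] := konig K1 K2.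
have [[y0 _]|ny] := pselect (exists y : Sig t, True); last first.
  by exists 1; split => // x; exfalso; apply: ny; exists x.
exists r^-1; split; first by rewrite invr_gt0; exact: (proj1 (hr y0)).
by move=> x; exact: (proj2 (hr x)).
Qed.

Definition consf t n (i : 'I_t) (w : {ffun 'I_n -> 'I_t}) : {ffun 'I_n.+1 -> 'I_t} :=
  [ffun k : 'I_n.+1 => if unlift ord0 k is Some k' then w k' else i].
Definition ws t n (w : {ffun 'I_n -> 'I_t}) : seq 'I_t := [seq w k | k <- enum 'I_n].

Lemma ws_consf t n i (w : {ffun 'I_n -> 'I_t}) : ws (consf i w) = i :: ws w.
Proof.
rewrite /ws enum_ordSl /= ffunE unlift_none; congr (_ :: _).
rewrite -map_comp; apply: eq_map => k /=; by rewrite ffunE liftK.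
Qed.

Lemma sum_ffunS (V : nmodType) t n (F : {ffun 'I_n.+1 -> 'I_t} -> V) :
  \sum_v F v = \sum_i \sum_(w : {ffun 'I_n -> 'I_t}) F (consf i w).
Proof.
rewrite pair_big /=.
pose g (v : {ffun 'I_n.+1 -> 'I_t}) := (v ord0, [ffun k => v (lift ord0 k)]).
rewrite (reindex (fun p : 'I_t * {ffun 'I_n -> 'I_t} => consf p.1 p.2)) //.
apply: onW_bij; exists g.
  by move=> [i w]; rewrite /g /= ffunE unlift_none; congr (_, _); apply/ffunP => k; rewrite !ffunE liftK.
move=> v; apply/ffunP => k; rewrite /g ffunE /=.
by case: unliftP => [j ->|->] //; rewrite ffunE.
Qed.

Definition catw t (s : seq 'I_t) (x : Sig t) : Sig t := foldr (@scons t) x s.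
Definition Mw (R : realType) t N (Pm : 'I_t -> 'M[R]_N) (s : seq 'I_t) : 'M[R]_N :=
  foldr (fun i M => Pm i *m M) 1%:M s.

Lemma birkS (R : realType) t (W : Sig t -> R) n i y :
  birk W n.+1 (scons i y) = W (scons i y) + birk W n y.
Proof.
rewrite /birk big_ord_recl /=; congr (_ + _); apply: eq_bigr => j _.
by rewrite add0n -iterS iterSr.
Qed.

Lemma expand (R : realType) t N (Pm : 'I_t -> 'M[R]_N) (W : Sig t -> R)
  (A : Sig t -> 'M[R]_N) :
  (forall x, \sum_i expR (W (scons i x)) *: ((Pm i)^T *m A (scons i x) *m Pm i) = A x) ->
  forall n x, A x = \sum_(w : {ffun 'I_n -> 'I_t})
     expR (birk W n (catw (ws w) x)) *:
       ((Mw Pm (ws w))^T *m A (catw (ws w) x) *m Mw Pm (ws w)).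
Proof.
move=> heig; elim=> [|n IH] x.
  rewrite (eq_bigr (fun _ => A x)); last first.
    move=> w _; rewrite /ws enum_ord0 /= /birk big_ord0 expR0 scale1r.
    by rewrite /Mw /= trmx1 mul1mx mulmx1.
  by rewrite sumr_const card_ffun !card_ord expn0.
rewrite sum_ffunS exchange_big /= [LHS](IH x); apply: eq_bigr => w _.
rewrite -{1}heig mulmx_sumr mulmx_suml scaler_sumr; apply: eq_bigr => i _.
rewrite ws_consf /= birkS expRD.
rewrite -scalemxAr -scalemxAl scalerA mulrC; congr (_ *: _).
by rewrite trmx_mul !mulmxA.
Qed.

Definition FN (R : realType) N (M : 'M[R]_N) : R := \sum_k \sum_j M j k ^+ 2.

Lemma FN_ge0 (R : realType) N (M : 'M[R]_N) : 0 <= FN M.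
Proof. by apply: sumr_ge0 => k _; apply: sumr_ge0 => j _; exact: sqr_ge0. Qed.

Lemma tr_quad (R : realType) N (M B : 'M[R]_N) :
  \tr (M^T *m B *m M) = \sum_k dotv (col k M) (B *m col k M).
Proof.
rewrite /mxtrace; apply: eq_bigr => k _; rewrite dotvE mxE.
under eq_bigr do rewrite mxE big_distrl /=.
rewrite exchange_big /=; apply: eq_bigr => j _.
rewrite !mxE big_distrr /=; apply: eq_bigr => l _.
by rewrite !mxE mulrA.
Qed.

Lemma tr_lb (R : realType) N (M B : 'M[R]_N) a :
  (forall v : 'cV[R]_N, a * \sum_j v j 0 ^+ 2 <= dotv v (B *m v)) ->
  a * FN M <= \tr (M^T *m B *m M).
Proof.
move=> h; rewrite tr_quad /FN mulr_sumr; apply: ler_sum => k _.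
apply: le_trans (h (col k M)); rewrite le_eqVlt; apply/orP; left; apply/eqP.
by congr (_ * _); apply: eq_bigr => j _; rewrite mxE.
Qed.

Lemma sum_bound (R : realType) t N (Pm : 'I_t -> 'M[R]_N) (W : Sig t -> R)
  (A : Sig t -> 'M[R]_N) a b :
  (forall x, \sum_i expR (W (scons i x)) *: ((Pm i)^T *m A (scons i x) *m Pm i) = A x) ->
  0 < a -> (forall x (v : 'cV[R]_N), a * \sum_j v j 0 ^+ 2 <= dotv v (A x *m v)) ->
  (forall x j l, `|A x j l| <= b) ->
  forall n x, \sum_(w : {ffun 'I_n -> 'I_t})
     expR (birk W n (catw (ws w) x)) * FN (Mw Pm (ws w)) <= N%:R * b / a.
Proof.
move=> heig a0 hell hb n x.
rewrite ler_pdivlMr // mulrC mulr_sumr.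
apply: (@le_trans _ _ (\tr (A x))).
  rewrite [X in \tr X](expand heig n x) raddf_sum /=; apply: ler_sum => w _.
  rewrite mxtraceZ mulrCA; apply: ler_wpM2l; first exact: expR_ge0.
  exact: tr_lb.
rewrite /mxtrace; apply: le_trans (_ : _ <= \sum_(k < N) b) _.
  by apply: ler_sum => k _; apply: le_trans (ler_norm _) (hb _ _ _).
by rewrite sumr_const card_ord mulr_natl.
Qed.

Lemma sum4 (R : realType) N (f : 'I_N -> 'I_N -> R) :
  \sum_a \sum_b \sum_k \sum_l (f a k + f b l) = 2 * N%:R ^+ 2 * \sum_a \sum_k f a k.
Proof.
have E1 : forall a b, \sum_k \sum_l (f a k + f b l) =
    N%:R * \sum_k f a k + N%:R * \sum_l f b l.
  move=> a b; rewrite (eq_bigr (fun k => N%:R * f a k + \sum_l f b l)); last first.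
    by move=> k _; rewrite big_split /= sumr_const card_ord mulr_natl.
  by rewrite big_split /= sumr_const card_ord -mulr_sumr !mulr_natl.
under eq_bigr do under eq_bigr do rewrite E1.
rewrite (eq_bigr (fun a => N%:R * (N%:R * \sum_k f a k) + N%:R * \sum_b \sum_l f b l)); first last.
  by move=> a _; rewrite big_split /= sumr_const card_ord -mulr_sumr !mulr_natl.
rewrite big_split /= -mulr_sumr -mulr_sumr sumr_const card_ord -mulr_natl.
set S := \sum_a _; ring.
Qed.

Lemma Sb_le2 (R : realType) N (a b k l : 'I_N) : `|@Sbasis R N a b k l| <= 2.
Proof.
have h1 : forall (c : bool), `|(c%:R : R)| <= 1 by case; rewrite ?normr1 ?normr0.
rewrite /Sbasis; case: ifP => _; rewrite !mxE.
  by apply: le_trans (h1 _) _; rewrite ler1n.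
apply: le_trans (ler_normD _ _) _.
by apply: le_trans (lerD (h1 _) (h1 _)) _.
Qed.

Lemma entry_bound (R : realType) N (M X : 'M[R]_N) a b :
  (forall k l, `|X k l| <= 2) ->
  `|(M *m X *m M^T) a b| <= \sum_k \sum_l (M a k ^+ 2 + M b l ^+ 2).
Proof.
move=> hX; rewrite mxE.
under eq_bigr do rewrite !mxE big_distrl /=.
rewrite exchange_big /=.
apply: le_trans (ler_norm_sum _ _ _) _; apply: ler_sum => k _.
apply: le_trans (ler_norm_sum _ _ _) _; apply: ler_sum => l _.
rewrite !normrM.
have h2 := two_ab (M a k) (M b l).
have h3 := hX k l.
have h4 : 0 <= `|M a k| * `|M b l| by rewrite mulr_ge0.
have h5 : 0 <= `|M a k| by [].
have h6 : 0 <= `|M b l| by [].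
nra.
Qed.

Lemma trM_bound (R : realType) N (M : 'M[R]_N) :
  `|@trM R N (fun X => M *m X *m M^T)| <= 2 * N%:R ^+ 2 * FN M.
Proof.
rewrite /trM; apply: le_trans (ler_norm_sum _ _ _) _.
pose F a b := \sum_k \sum_l (M a k ^+ 2 + M b l ^+ 2).
have F0 : forall a b, 0 <= F a b.
  move=> a b; apply: sumr_ge0 => k _; apply: sumr_ge0 => l _.
  by rewrite addr_ge0 // sqr_ge0.
apply: (@le_trans _ _ (\sum_a \sum_b F a b)).
  apply: ler_sum => a _; apply: le_trans (ler_norm_sum _ _ _) _.
  have H1 : \sum_(b < N | (a <= b)%N) F a b <= \sum_b F a b.
    rewrite [X in _ <= X](bigID (fun b : 'I_N => (a <= b)%N)) /= lerDl.
    by apply: sumr_ge0 => b _.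
  apply: le_trans H1.
  by apply: ler_sum => b _; apply: entry_bound => k l; exact: Sb_le2.
rewrite /F sum4 /FN [X in _ <= _ * X]exchange_big.
done.
Qed.

Lemma tPsi_wordE (R : realType) t d q (psi : 'I_t -> 'cV[R]_d -> 'cV[R]_d) s X :
  @tPsi_word R t d q psi s X =
  Mw (fun i => pullmx q (Dmat (psi i))) s *m X *m (Mw (fun i => pullmx q (Dmat (psi i))) s)^T.
Proof.
elim: s X => [|i s IH] X /=.
  by rewrite /Mw /= trmx1 mul1mx mulmx1.
by rewrite IH /tPsi trmx_mul !mulmxA.
Qed.

Lemma catw_nth t (s : seq 'I_t) x i0 j : (j < size s)%N -> catw s x j = nth i0 s j.
Proof.
elim: s j => [|i s IH] [|j] //= hj.
by rewrite -IH.
Qed.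

Lemma perpt_agree t n (w : {ffun 'I_n.+1 -> 'I_t}) x :
  agree n.+1 (perpt w) (catw (ws w) x).
Proof.
move=> j hj; rewrite (catw_nth _ (w ord0)); last by rewrite size_map size_enum_ord.
rewrite /perpt /ws (nth_map ord0) ?size_enum_ord // modn_small //.
congr (w _); apply: val_inj; rewrite /= nth_enum_ord // inordK //.
Qed.

Lemma iter_shift t k (z : Sig t) j : iter k (@Defs.shift t) z j = z (j + k)%N.
Proof.
elim: k j => [|k IH] j; first by rewrite addn0.
by rewrite iterS [in LHS]/Defs.shift IH addSnnS.
Qed.

Lemma geom_le (R : realType) (r : R) m : 0 <= r < 1 ->
  \sum_(j < m) r ^+ j <= (1 - r)^-1.
Proof.
case/andP=> r0 r1.
have hS : (1 - r) * \sum_(j < m) r ^+ j = 1 - r ^+ m.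
  by rewrite -opprB mulNr -subrX1 opprB.
rewrite -(mul1r (1 - r)^-1) ler_pdivlMr ?subr_gt0 // mulrC hS.
by rewrite lerBlDr lerDl exprn_ge0.
Qed.

Lemma birk_dist (R : realType) t (gam alpha : R) (V : Sig t -> R) K m y z :
  0 < gam < 1 -> 0 < alpha ->
  (forall (n : nat) (x y : Sig t), agree n x y -> `|V x - V y| <= K * (gam ^+ n) `^ alpha) ->
  agree m y z -> `|birk V m y - birk V m z| <= `|K| / (1 - gam `^ alpha).
Proof.
move=> hg ha hK hyz.
have /andP[r0 r1] := r_lt1 hg ha.
set r := gam `^ alpha in r0 r1 *.
have g0 : 0 <= gam by case/andP: hg => /ltW.
rewrite /birk -sumrB; apply: le_trans (ler_norm_sum _ _ _) _.
apply: (@le_trans _ _ (\sum_(j < m) `|K| * r ^+ (m - j))).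
  apply: ler_sum => j _.
  apply: le_trans (hK (m - j)%N _ _ _) _.
    move=> k hk; rewrite !iter_shift; apply: hyz.
    by rewrite addnC -ltn_subRL.
  rewrite powR_n //; apply: ler_wpM2r; first by rewrite exprn_ge0 // ltW.
  exact: ler_norm.
rewrite -mulr_sumr ler_wpM2l //.
apply: le_trans (geom_le m (_ : 0 <= r < 1)); last by rewrite ltW.
rewrite [X in X <= _](reindex_inj rev_ord_inj) /=; apply: ler_sum => j _.
rewrite subKn; last exact: ltn_ord.
by rewrite exprSr ler_piMr // ?exprn_ge0 // ltW.
Qed.

Lemma birk_scale (R : realType) t (V : Sig t -> R) k m z :
  birk (fun x => k * V x) m z = k * birk V m z.
Proof. by rewrite /birk mulr_sumr. Qed.

Lemma birk_ge0 (R : realType) t (V : Sig t -> R) m z :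
  (forall x, 0 < V x) -> 0 <= birk V m z.
Proof. by move=> h; apply: sumr_ge0 => j _; exact: ltW. Qed.

Lemma key_ineq (R : realType) (c D Bp Bc y : R) :
  `|Bp - Bc| <= D -> 0 <= Bp -> 0 <= Bc -> expR (`|c| * Bp) <= y ->
  1 <= y * (expR (`|c| * D) * expR (- c * Bc)).
Proof.
move=> hd hp hc hy.
rewrite -expRD.
have hE : - (`|c| * Bp) <= `|c| * D + - c * Bc.
  have h1 : c <= `|c| := ler_norm c.
  have h2 : 0 <= `|c| := normr_ge0 c.
  have h3 : Bc - Bp <= D by apply: le_trans (ler_norm _) _; rewrite distrC.
  nra.
apply: (@le_trans _ _ (expR (`|c| * Bp) * expR (- (`|c| * Bp)))).
  by rewrite -expRD subrr expR0.
apply: ler_pM; rewrite ?expR_ge0 //.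
by rewrite ler_expR.
Qed.

Lemma orbit_bound (R : realType) t d q (psi : 'I_t -> 'cV[R]_d -> 'cV[R]_d)
  (Vh : Sig t -> R) c (A : Sig t -> 'M[R]_(dimL d q)) a b D :
  (forall x, \sum_i expR (- c * Vh (scons i x)) *:
      ((pullmx q (Dmat (psi i)))^T *m A (scons i x) *m pullmx q (Dmat (psi i))) = A x) ->
  0 < a -> (forall x (v : 'cV[R]_(dimL d q)), a * \sum_j v j 0 ^+ 2 <= dotv v (A x *m v)) ->
  0 <= b -> (forall x j l, `|A x j l| <= b) ->
  (forall m y z, agree m y z -> `|birk Vh m y - birk Vh m z| <= D) ->
  (forall x, 0 < Vh x) ->
  forall n y, 1 <= y ->
  @orbit_term R t d q psi (fun x => `|c| * Vh x) y n <=
    2 * (dimL d q)%:R ^+ 2 * expR (`|c| * D) * ((dimL d q)%:R * b / a) * y.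
Proof.
move=> heig a0 hell b0 hb hD hpos n y y1.
have y0 : 0 <= y by apply: le_trans y1.
set N := dimL d q.
set Pm := fun i => pullmx q (Dmat (psi i)).
have hSB := @sum_bound R t N Pm (fun x => - c * Vh x) A a b heig a0 hell hb.
have B0 : 0 <= 2 * N%:R ^+ 2 * expR (`|c| * D) * (N%:R * b / a) * y.
  by rewrite !mulr_ge0 ?ler0n ?sqr_ge0 ?expR_ge0 ?invr_ge0 ?(ltW a0).
rewrite /orbit_term.
match goal with |- context[_^-1 * ?s] => set S := s end.
suff hS : S <= 2 * N%:R ^+ 2 * expR (`|c| * D) * (N%:R * b / a) * y.
  apply: le_trans (ler_wpM2l _ hS) _; first by rewrite invr_ge0.
  by rewrite ler_piMl // invf_le1 // ler1n.
have [[x0 _]|nx] := pselect (exists x : Sig t, True); last first.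
  rewrite /S big_pred0 // => w; exfalso; apply: nx; by exists (perpt w).
pose G (w : {ffun 'I_n.+1 -> 'I_t}) := 2 * N%:R ^+ 2 * expR (`|c| * D) * y *
   (expR (birk (fun x => - c * Vh x) n.+1 (catw (ws w) x0)) * FN (Mw Pm (ws w))).
have G0 : forall w, 0 <= G w.
  by move=> w; rewrite !mulr_ge0 ?expR_ge0 ?FN_ge0.
apply: (@le_trans _ _ (\sum_(w | `[< minper n.+1 (perpt w) >] &&
       (expR (birk (fun x => `|c| * Vh x) n.+1 (perpt w)) <= y)) G w)).
  apply: ler_sum => w /andP[_ hw].
  rewrite (_ : @tPsi_word R t d q psi [seq w k | k <- enum 'I_n.+1] = fun X => Mw Pm (ws w) *m X *m (Mw Pm (ws w))^T); last first.
    by apply: funext => X; rewrite tPsi_wordE.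
  apply: le_trans (ler_norm _) _; apply: le_trans (trM_bound _) _.
  rewrite birk_scale in hw.
  have hk := key_ineq (c := c) (hD _ _ _ (perpt_agree w x0)) (birk_ge0 _ _ hpos)
     (birk_ge0 _ _ hpos) hw.
  rewrite /G birk_scale.
  set F := FN _; set E1 := expR (`|c| * D); set E2 := expR (_ * _).
  have F0 : 0 <= F by apply: FN_ge0.
  have C0 : 0 <= 2 * N%:R ^+ 2 :> R by rewrite mulr_ge0 ?sqr_ge0.
  have -> : 2 * N%:R ^+ 2 * E1 * y * (E2 * F) = (2 * N%:R ^+ 2 * F) * (y * (E1 * E2)) by ring.
  by apply: ler_peMr; rewrite ?mulr_ge0.
apply: (@le_trans _ _ (\sum_w G w)).
  by rewrite [X in _ <= X](bigID (fun w : {ffun 'I_n.+1 -> 'I_t} => `[< minper n.+1 (perpt w) >] &&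
       (expR (birk (fun x => `|c| * Vh x) n.+1 (perpt w)) <= y))) /= lerDl sumr_ge0.
rewrite /G -mulr_sumr [X in _ <= X]mulrAC.
apply: ler_wpM2l; first by rewrite !mulr_ge0 ?expR_ge0.
exact: hSB.
Qed.

Unset Implicit Arguments. Set Strict Implicit. Set Printing Implicit Defensive.

Theorem lemma4p4 (R : realType) (t d q : nat) (gam alpha : R)
    (psi : 'I_t -> 'cV[R]_d -> 'cV[R]_d) (Vh : Sig t -> R) (c : R) :
  0 < gam < 1 -> 0 < alpha ->
  (1 <= q <= d)%N ->
  (forall i, affine_bij (psi i)) ->
  (exists kappa : R, kappa < 1 /\ forall i u v,
      enorm (psi i u - psi i v) <= kappa * enorm (u - v)) ->
  (* (ND_q) *)
  (exists g2 : R, 0 < g2 /\ forall c0 e : 'cV[R]_(dimL d q), exists i : 'I_t,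
      `|dotv (pullmx q (Dmat (psi i)) *m c0) e| >= g2 * enorm c0 * enorm e) ->
  holder gam alpha Vh ->
  (forall x, 0 < Vh x) ->
  c != 0 ->
  pressure_is q psi (fun x => - c * Vh x) 0 ->
  forall gam' : R, 1 < gam' ->
    exists C : R, \forall y \near +oo,
      piV q psi (fun x => `|c| * Vh x) y / y `^ gam' <= C.
Proof.
move=> hg ha _ _ _ _ hhol hpos hc hpr gam' hgam'.
have [A [hcA [hpd heigA]]] := hpr.
have heig : forall x, \sum_i expR (- c * Vh (scons i x)) *:
      ((pullmx q (Dmat (psi i)))^T *m A (scons i x) *m pullmx q (Dmat (psi i))) = A x.
  by move=> x; have := heigA x; rewrite /transfer expR0 scale1r.
have [a [a0 hell]] := unif_ellip hcA hpd.
have [b hb] := unif_bound hcA.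
have hb' : forall x j l, `|A x j l| <= `|b|.
  by move=> x j l; apply: le_trans (hb x j l) (ler_norm b).
have hhol' := hhol; case: hhol' => K hK.
set D := `|K| / (1 - gam `^ alpha).
have hD : forall m y z, agree m y z -> `|birk Vh m y - birk Vh m z| <= D.
  by move=> m y z; apply: birk_dist hg ha hK.
have [m0 [m00 hm0]] := pos_lb hg ha hhol hpos.
have hob := orbit_bound heig a0 hell (normr_ge0 b) hb' hD hpos.
set K1 := 2 * (dimL d q)%:R ^+ 2 * expR (`|c| * D) * ((dimL d q)%:R * `|b| / a).
have hc0 : 0 < `|c| by rewrite normr_gt0.
have hzero : forall n y, 1 <= y -> ln y / (`|c| * m0) < n%:R ->
    @orbit_term R t d q psi (fun x => `|c| * Vh x) y n = 0.
  move=> n y y1 hn; rewrite /orbit_term big_mkcond big1 ?mulr0 // => w _.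
  rewrite ifF //; apply/negbTE; rewrite negb_and -ltNge orbC; apply/orP; left.
  rewrite birk_scale.
  have hB : n.+1%:R * m0 <= birk Vh n.+1 (perpt w).
    rewrite /birk; apply: le_trans (ler_sum _ (fun j _ => hm0 _)).
    by rewrite sumr_const card_ord mulr_natl.
  have y0 : 0 < y by apply: lt_le_trans y1.
  rewrite -[X in X < _]lnK ?posrE // ltr_expR.
  move: hn; rewrite ltr_pdivrMr ?mulr_gt0 // => hn.
  have hn1 : n%:R <= n.+1%:R :> R by rewrite ler_nat.
  nra.
set e := gam' - 1.
have e0 : 0 < e by rewrite subr_gt0.
have K10 : 0 <= K1.
  by rewrite !mulr_ge0 ?ler0n ?sqr_ge0 ?expR_ge0 ?invr_ge0 ?(ltW a0).
exists (K1 * ((e * (`|c| * m0))^-1 + 1)).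
exists 1; split => // y hy.
have y1 : 1 <= y by apply: ltW.
have y0 : 0 < y by apply: lt_trans hy.
set X := ln y / (`|c| * m0).
have X0 : 0 <= X by rewrite divr_ge0 ?ln_ge0 // mulr_ge0 // ltW.
set L := (Num.truncn X).+1.
have hL : forall n, (L <= n)%N -> @orbit_term R t d q psi (fun x => `|c| * Vh x) y n = 0.
  move=> n hn; apply: hzero => //.
  apply: lt_le_trans (truncnS_gt X) _; by rewrite ler_nat.
have -> : piV q psi (fun x => `|c| * Vh x) y =
    \sum_(n < L) @orbit_term R t d q psi (fun x => `|c| * Vh x) y n.
  rewrite /piV fsbig_ord; apply/esym/fsbig_widen => // n [_ /= hn].
  by apply: hL; rewrite leqNgt; apply/negP => h; apply: hn.
have hS : \sum_(n < L) @orbit_term R t d q psi (fun x => `|c| * Vh x) y n <= L%:R * (K1 * y).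
  apply: le_trans (_ : _ <= \sum_(n < L) K1 * y) _.
    by apply: ler_sum => n _; apply: hob.
  by rewrite sumr_const card_ord mulr_natl.
have hLX : L%:R <= X + 1 by rewrite /L -natr1 lerD2r truncn_le.
set P := y `^ e.
have P0 : 0 < P by rewrite powR_gt0.
have P1 : 1 <= P.
  by rewrite /P -(powRr0 y); apply: ler_powR => //; rewrite ltW.
have hXP : X <= P / (e * (`|c| * m0)).
  have hl : e * ln y <= P by rewrite -ln_powR; apply: ltW; apply: ln_sublinear.
  have k0 : 0 < `|c| * m0 by rewrite mulr_gt0.
  rewrite /X ler_pdivrMr //.
  have -> : P / (e * (`|c| * m0)) * (`|c| * m0) = P / e.
    by field; rewrite !gt_eqF.
  by rewrite ler_pdivlMr // mulrC.
have hyg : y `^ gam' = y * P.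
  have -> : gam' = 1 + e by rewrite /e addrC subrK.
  rewrite /P powRD ?powRr1 ?gt_eqF ?implybT //; first exact: ltW.
  by rewrite addr_gt0.
rewrite hyg ler_pdivrMr ?mulr_gt0 //.
apply: le_trans hS _.
have hL2 : L%:R <= P * ((e * (`|c| * m0))^-1 + 1).
  apply: le_trans hLX _; rewrite mulrDr mulr1; exact: lerD.
apply: le_trans (ler_wpM2r _ hL2) _; first by rewrite mulr_ge0 // ltW.
rewrite le_eqVlt; apply/orP; left; apply/eqP; ring.
Qed.
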